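(* Let $n\ge 1$, $i\in\{1,\ldots,n-1\}$, and let $C$ be a set of transpositions in $S_n$ which is $s_i$-stable, i.e. $s_i\in C$ and $s_iCs_i=C$. Then the divided difference operator $\partial_i$ is defined on all of $H_C$, and $\partial_i(H_C)\subseteq H_C$.
   Context: Let $S_n$ be the symmetric group on $\{1,\ldots,n\}$ with $(vw)(j)=v(w(j))$, and $s_i=(i\leftrightarrow i+1)$. Let $H=\mathrm{Fun}(S_n,\mathbb{C}[t_1,\ldots,t_n])$ be the ring of functions from $S_n$ to the polynomial ring, with pointwise operations. The star action (right action) of $w\in S_n$ on $f\in H$ is $(f*w)(v)=f(vw^{-1})$, extended linearly to $\mathbb{C}[S_n]$ (so $f*(1-\tau)=f-f*\tau$). Let $t_i\in H$ denote the constant function $v\mapsto t_i$ and $x_i\in H$ the function $v\mapsto t_{v(i)}$. For a transposition $\tau=(i\leftrightarrow k)$, an element $f\in H$ satisfies condition $\tau$ if $f-f*\tau=(x_i-x_k)g$ for some $g\in H$; these elements form a subring $H_\tau$, and for a set $C$ of transpositions $H_C=\bigcap_{\tau\in C}H_\tau$ (with $H_\varnothing=H$). For $f\in H_{s_i}$, the divided difference $\partial_i(f)$ is the unique $g\in H$ with $f-f*s_i=(x_i-x_{i+1})g$ (unique since $x_i-x_{i+1}$ is nonzero at every permutation); $\partial_i$ is defined exactly on $H_{s_i}$. *)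

(* Defs.v *)
From mathcomp Require Import all_boot all_algebra all_fingroup.
From mathcomp Require Import mpoly complex reals.

Set Implicit Arguments.
Unset Strict Implicit.
Unset Printing Implicit Defensive.
Import GRing.Theory.
Local Open Scope ring_scope.

(* S_n := {perm 'I_n}, points are 0-based: {0,...,n-1} stands for {1,...,n}.
   Polynomial ring C[t_1..t_n] := {mpoly C[n]}, with t_j := 'X_j. *)

Section Defs.
Variables (R : realType) (n : nat).
Local Notation C := (complex R).
Local Notation H := ({perm 'I_n} -> {mpoly C[n]}).

(* Paper's product (vw)(j) = v(w(j)); MathComp's (s * t) x = t (s x),
   so vw = w * v in MathComp. *)
Definition pcomp (v w : {perm 'I_n}) : {perm 'I_n} := (w * v)%g.

Definition star (f : H) (w : {perm 'I_n}) : H := fun v => f (pcomp v (w^-1)%g).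

Definition xfun (i : 'I_n) : H := fun v => 'X_(v i).

Definition tfun (i : 'I_n) : H := fun _ => 'X_i.

Definition cond_pair (i k : 'I_n) (f : H) : Prop :=
  exists g : H, forall v, f v - star f (tperm i k) v = (xfun i v - xfun k v) * g v.

Definition is_transposition (tau : {perm 'I_n}) : Prop :=
  exists i k : 'I_n, i != k /\ tau = tperm i k.

Definition H_tau (tau : {perm 'I_n}) (f : H) : Prop :=
  exists i k : 'I_n, [/\ i != k, tau = tperm i k & cond_pair i k f].

Definition H_C (Cs : {set {perm 'I_n}}) (f : H) : Prop :=
  forall tau, tau \in Cs -> H_tau tau f.

(* simple transposition s_i = (i <-> i+1), 0-based i with i+1 < n *)
Definition s_ (i : nat) (hi : (i.+1 < n)%N) : {perm 'I_n} :=
  tperm (Ordinal (ltnW hi)) (Ordinal hi).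

Definition x_ (i : nat) (hi : (i.+1 < n)%N) : H := xfun (Ordinal (ltnW hi)).
Definition x_succ (i : nat) (hi : (i.+1 < n)%N) : H := xfun (Ordinal hi).

(* g is the divided difference partial_i(f): f - f*s_i = (x_i - x_{i+1}) g.
   (Unique, as stated in the paper.) *)
Definition is_divdiff (i : nat) (hi : (i.+1 < n)%N) (f g : H) : Prop :=
  forall v, f v - star f (s_ hi) v = (x_ hi v - x_succ hi v) * g v.

Definition divdiff_defined (i : nat) (hi : (i.+1 < n)%N) (f : H) : Prop :=
  exists g : H, is_divdiff hi f g.

Definition si_stable (i : nat) (hi : (i.+1 < n)%N) (Cs : {set {perm 'I_n}}) : Prop :=
  s_ hi \in Cs /\ [set pcomp (pcomp (s_ hi) c) (s_ hi) | c in Cs] = Cs.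

End Defs.

(* Main.v *)
Require Import Defs.
From mathcomp Require Import all_boot all_algebra all_fingroup.
From mathcomp Require Import mpoly complex reals.
From Stdlib Require Import IndefiniteDescription.
From mathcomp Require Import ring.
Set Implicit Arguments.
Unset Strict Implicit.
Unset Printing Implicit Defensive.
Import GRing.Theory.
Local Open Scope ring_scope.

Section Helpers.
Variables (K : idomainType) (n : nat).
Local Notation P := {mpoly K[n]}.

Definition substX (phi : 'I_n -> 'I_n) : n.-tuple P := [tuple 'X_(phi j) | j < n].
Definition msub phi (p : P) : P := p \mPo substX phi.

Lemma msubX phi j : msub phi 'X_j = 'X_(phi j).
Proof. by rewrite /msub comp_mpolyXU -tnth_nth tnth_mktuple. Qed.

Definition cong (d a b : P) := exists q, a - b = d * q.

Lemma cong_add d a b c e : cong d a b -> cong d c e -> cong d (a + c) (b + e).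
Proof. by move=> [q1 h1] [q2 h2]; exists (q1 + q2); rewrite mulrDr -h1 -h2; ring. Qed.

Lemma cong_mul d a b c e : cong d a b -> cong d c e -> cong d (a * c) (b * e).
Proof.
by move=> [q1 h1] [q2 h2]; exists (q1 * c + b * q2);
  rewrite mulrDr mulrA -h1 mulrCA -h2; ring.
Qed.

Lemma cong_refl d a : cong d a a.
Proof. by exists 0; rewrite subrr mulr0. Qed.

Lemma cong_exp d a b k : cong d a b -> cong d (a ^+ k) (b ^+ k).
Proof.
move=> h; elim: k => [|k ih]; first by rewrite !expr0; apply: cong_refl.
by rewrite !exprS; apply: cong_mul.
Qed.

Lemma cong_scale d c a b : cong d a b -> cong d (c *: a) (c *: b).
Proof. by move=> [q h]; exists (c *: q); rewrite -scalerBr h scalerAr. Qed.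

Lemma cong_msub phi d (hphi : forall j, cong d 'X_j 'X_(phi j)) (p : P) :
  cong d p (msub phi p).
Proof.
rewrite {1}(mpolyE p) /msub comp_mpolyE.
apply: (big_ind2 (cong d)); first exact: cong_refl.
  by move=> *; apply: cong_add.
move=> m _; apply: cong_scale; rewrite mpolyXE_id.
apply: (big_ind2 (cong d)); first exact: cong_refl.
  by move=> *; apply: cong_mul.
by move=> j _; rewrite tnth_mktuple; apply: cong_exp.
Qed.

Definition phiv (p q : 'I_n) (j : 'I_n) := if j == p then q else j.

Lemma cong_phiv p q j : cong ('X_p - 'X_q) 'X_j 'X_(phiv p q j).
Proof.
rewrite /phiv; case: eqP => [->|_]; last exact: cong_refl.
by exists 1; rewrite mulr1.
Qed.


Lemma msubB phi a b : msub phi (a - b) = msub phi a - msub phi b.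
Proof. exact: comp_mpolyB. Qed.
Lemma msubM phi a b : msub phi (a * b) = msub phi a * msub phi b.
Proof. exact: (rmorphM (comp_mpoly (substX phi))). Qed.

Lemma X_sub_neq0 (i j : 'I_n) : i != j -> ('X_i - 'X_j : P) != 0.
Proof.
move=> ij; apply/eqP => /(congr1 (mcoeff U_(i)%MM)).
by rewrite mcoeffB !mcoeffXU eqxx eq_sym (negbTE ij) subr0 mcoeff0; apply/eqP; rewrite oner_eq0.
Qed.

Lemma cancel_lemma (p q : 'I_n) (L1 L2 G1 G2 k : P) :
  L1 * G1 - L2 * G2 = ('X_p - 'X_q) * k ->
  msub (phiv p q) L1 = msub (phiv p q) L2 ->
  msub (phiv p q) L1 != 0 ->
  cong ('X_p - 'X_q) G1 G2.
Proof.
move=> E eqL nz.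
have := congr1 (msub (phiv p q)) E.
rewrite msubB !msubM msubB !msubX.
have -> : 'X_(phiv p q p) - 'X_(phiv p q q) = 0 :> P.
  by rewrite /phiv eqxx; case: (q =P p) => [->|_]; rewrite subrr.
rewrite mul0r -eqL -mulrBr => /eqP.
rewrite mulf_eq0 (negbTE nz) /= -msubB => /eqP h0.
have := cong_msub (@cong_phiv p q) (G1 - G2); rewrite h0 => -[r hr].
by exists r; rewrite -hr subr0.
Qed.

End Helpers.

Lemma tperm_eq (T : finType) (a b a' b' : T) : a != b -> tperm a b = tperm a' b' ->
  (a = a' /\ b = b') \/ (a = b' /\ b = a').
Proof.
move=> ab E; have := congr1 (fun t : {perm T} => t a) E; rewrite tpermL.
case: tpermP => [-> ->|-> ->|_ _ ba]; [by left|by right|].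
by move: ab; rewrite ba eqxx.
Qed.

Section Main.
Variables (R : realType) (n : nat).
Local Notation C := (complex R).
Local Notation H := ({perm 'I_n} -> {mpoly C[n]}).

Lemma hf_any (c : {perm 'I_n}) (f : H) : H_tau c f ->
  forall a b, a != b -> c = tperm a b -> forall w,
  exists q, f w - f (c * w)%g = ('X_(w a) - 'X_(w b)) * q.
Proof.
move=> [a' [b' [ab' E' [h Hh]]]] a b ab E w.
have := Hh w; rewrite /Defs.star /Defs.pcomp /xfun tpermV -E' => ->.
have [[<- <-]|[<- <-]] := tperm_eq ab (etrans (esym E) E').
  by exists (h w).
by exists (- h w); ring.
Qed.

Theorem lemma2_main (i : nat) (hi : (i.+1 < n)%N)
    (Cs : {set {perm 'I_n}}) :
  (forall tau, tau \in Cs -> is_transposition tau) ->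
  si_stable hi Cs ->
  (forall f, H_C (R := R) Cs f -> divdiff_defined hi f) /\
  (forall f g, H_C (R := R) Cs f -> is_divdiff hi f g -> H_C Cs g).
Proof.
move=> _ [sC stab].
set i0 : 'I_n := Ordinal (ltnW hi).
set i1 : 'I_n := Ordinal hi.
have i01 : i0 != i1 by apply/eqP => -[] /eqP; rewrite eqn_leq ltnn andbF.
have sE : s_ hi = tperm i0 i1 by [].
have ss : (s_ hi * s_ hi)%g = 1%g by rewrite sE tperm2.
split.
  move=> f Hf.
  have := hf_any (Hf _ sC) i01 sE.
  move=> /functional_choice [g Hg]; exists g => v.
  by rewrite /Defs.star /Defs.pcomp /x_ /x_succ /xfun sE tpermV -sE.
move=> f g Hf Hg tau tauC.
have [a [b [ab Etau _]]] := Hf _ tauC.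
exists a, b; split => //.
have Hg' : forall v, f v - f (s_ hi * v)%g = ('X_(v i0) - 'X_(v i1)) * g v.
  by move=> v; have := Hg v; rewrite /Defs.star /Defs.pcomp /x_ /x_succ /xfun sE tpermV.
rewrite /cond_pair /Defs.star /Defs.pcomp /xfun tpermV -Etau.
apply: (functional_choice (fun v q => g v - g (tau * v)%g = ('X_(v a) - 'X_(v b)) * q)) => v.
have [taus|taus] := eqVneq tau (s_ hi).
  have := Hg' (s_ hi * v)%g; rewrite mulgA ss mul1g !permM sE tpermL tpermR -sE.
  have := Hg' v => E1 E2.
  have : ('X_(v i0) - 'X_(v i1)) * (g v - g (s_ hi * v)%g) = 0.
    rewrite mulrBr -E1.
    have -> : ('X_(v i0) - 'X_(v i1)) * g (s_ hi * v)%g =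
      - (('X_(v i1) - 'X_(v i0)) * g (s_ hi * v)%g) by ring.
    by rewrite -E2; ring.
  have nz : ('X_(v i0) - 'X_(v i1) : {mpoly C[n]}) != 0.
    by apply: X_sub_neq0; rewrite (inj_eq perm_inj).
  move/eqP; rewrite mulf_eq0 (negbTE nz) /=.
  rewrite subr_eq0 => /eqP ->; exists 0; rewrite taus subrr mulr0 //.
have [q1 E1] := hf_any (Hf _ tauC) ab Etau v.
set tau' := (s_ hi * tau * s_ hi)%g.
have tau'C : tau' \in Cs.
  move: (tauC); rewrite -{1}stab => /imsetP [c cC Ec].
  by rewrite /tau' Ec /Defs.pcomp !mulgA ss mul1g -!mulgA ss mulg1.
have Etau' : tau' = tperm (s_ hi a) (s_ hi b).
  by rewrite -tpermJ -Etau /conjg /tau' mulgA sE tpermV.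
have ab' : s_ hi a != s_ hi b by rewrite (inj_eq perm_inj).
have [q2 E2] := hf_any (Hf _ tau'C) ab' Etau' (s_ hi * v)%g.
rewrite !permM sE !tpermK -sE in E2.
have e2 : (tau' * (s_ hi * v))%g = (s_ hi * (tau * v))%g.
  by rewrite /tau' -!mulgA (mulgA (s_ hi) (s_ hi)) ss mul1g.
rewrite e2 in E2.
have Eg1 := Hg' v.
have Eg2 := Hg' (tau * v)%g.
rewrite !permM in Eg2.
have key : ('X_(v i0) - 'X_(v i1)) * g v -
   ('X_(v (tau i0)) - 'X_(v (tau i1))) * g (tau * v)%g =
   ('X_(v a) - 'X_(v b)) * (q1 - q2).
  by rewrite -Eg1 -Eg2 mulrBr -E1 -E2; ring.
have hsub : forall x, msub (phiv (v a) (v b)) ('X_(v (tau x)) : {mpoly C[n]}) =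
                      msub (phiv (v a) (v b)) 'X_(v x).
  move=> x; rewrite !msubX /phiv Etau.
  have vab : (v b == v a) = false by rewrite (inj_eq perm_inj) eq_sym (negbTE ab).
  case: tpermP => [->|->|]; rewrite ?eqxx ?vab //.
apply: (cancel_lemma key).
- by rewrite !msubB !hsub.
- rewrite msubB !msubX; apply: X_sub_neq0; apply: contra taus.
  rewrite /phiv Etau sE.
  have vi : v i0 != v i1 by rewrite (inj_eq perm_inj).
  case: (v i0 =P v a) => [/perm_inj h0|n0]; case: (v i1 =P v a) => [/perm_inj h1|n1].
  + by move: i01; rewrite h0 h1 eqxx.
  + by move/eqP/perm_inj => <-; rewrite h0.
  + by move/eqP/perm_inj => h0; rewrite h0 h1 tpermC.
  + by move/eqP => e; move: vi; rewrite e eqxx.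
Qed.

End Main.

Theorem lemma2 (R : realType) (n : nat) (i : nat) (hi : (i.+1 < n)%N)
    (Cs : {set {perm 'I_n}}) :
  (forall tau, tau \in Cs -> is_transposition tau) ->
  si_stable hi Cs ->
  (forall f, H_C (R := R) Cs f -> divdiff_defined hi f) /\
  (forall f g, H_C (R := R) Cs f -> is_divdiff hi f g -> H_C Cs g).
Proof. exact: lemma2_main. Qed.
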